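(* Let $q\ge 1$ and $t\ge 0$ be integers. A code $\mathcal{C}\subseteq\mathcal{S}_{\mathrm{all}}^q$ is a $t$-tail-deletion-detecting code if and only if it is a $t$-tail-insertion-detecting code. Moreover, for every integer $q\ge 3$ and every integer $t\ge 1$ there exists a code $\mathcal{C}\subseteq\mathcal{S}_{\mathrm{all}}^q$ that is a $t$-tail-deletion-detecting code but is not a $2$-tail-indel-detecting code.
   Context: Let $[q]=\{0,1,\dots,q-1\}$. For $1\le m\le q$, a partial permutation of length $m$ over $[q]$ is a sequence $\pi=(\pi_1,\dots,\pi_m)$ of $m$ pairwise distinct elements of $[q]$; write $|\pi|=m$. Let $\mathcal{S}_m^q$ be the set of all partial permutations of length $m$ and $\mathcal{S}_{\mathrm{all}}^q=\bigcup_{m=1}^{q}\mathcal{S}_m^q$. A code is any subset of $\mathcal{S}_{\mathrm{all}}^q$. Juxtaposition $\omega\pi$ denotes concatenation with $\omega$ on the left. Tail deletions: for $\pi$ of length $m$ and an integer $j\ge 0$, let $\pi_{\downarrow j}=(\pi_{k+1},\dots,\pi_m)$ with $k=\min(j,m-1)$ (leftmost symbols are deleted; the last symbol is never deleted). For an integer $t\ge 0$, $\mathcal{B}_{\mathrm{del}}^t(\pi)=\{\pi_{\downarrow j}:0\le j\le t\}$. Tail insertions: $\mathcal{B}_{\mathrm{ins}}^t(\pi)$ is the set of all $\omega\pi\in\mathcal{S}_{\mathrm{all}}^q$ where $\omega$ is a (possibly empty) sequence of at most $t$ elements of $[q]$ (so all entries of $\omega\pi$ are pairwise distinct). Tail indels: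 $\mathcal{B}_{\mathrm{indel}}^t(\pi)$ is the set of all partial permutations obtainable from $\pi$ by a sequence of at most $t$ operations, each being either a single tail deletion (removing the first symbol of a partial permutation of length at least $2$) or a single tail insertion (prepending an element of $[q]$ not already occurring). For $X\in\{\mathrm{del},\mathrm{ins},\mathrm{indel}\}$, a code $\mathcal{C}$ is $t$-tail-$X$-detecting (i.e. $t$-tail-deletion-, insertion-, indel-detecting) if $\mathcal{C}\cap\mathcal{B}_X^t(\pi)=\{\pi\}$ for every $\pi\in\mathcal{C}$. *)

(* Defs.v *)
(* Partial permutations over [q] = {0,...,q-1} are lists of nats. *)
From mathcomp Require Import all_boot.
Set Implicit Arguments. Unset Strict Implicit. Unset Printing Implicit Defensive.

Definition is_pperm (q : nat) (s : seq nat) : bool :=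
  [&& 0 < size s, size s <= q, uniq s & all (fun x => x < q) s].

Definition is_code (q : nat) (C : seq nat -> Prop) : Prop :=
  forall s, C s -> is_pperm q s.

Definition tail_del (j : nat) (s : seq nat) : seq nat :=
  drop (minn j (size s).-1) s.

Definition B_del (t : nat) (s : seq nat) : seq nat -> Prop :=
  fun u => exists j, j <= t /\ u = tail_del j s.

Definition B_ins (q t : nat) (s : seq nat) : seq nat -> Prop :=
  fun u => exists w : seq nat, size w <= t /\ u = w ++ s /\ is_pperm q u.

Definition indel_step (q : nat) (s u : seq nat) : Prop :=
  (1 < size s /\ u = behead s) \/
  (exists a, a < q /\ a \notin s /\ u = a :: s).

Fixpoint indel_steps (q n : nat) (s u : seq nat) : Prop :=
  match n with
  | 0 => u = s
  | n'.+1 => exists v, indel_step q s v /\ indel_steps q n' v u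
  end.

Definition B_indel (q t : nat) (s : seq nat) : seq nat -> Prop :=
  fun u => exists n, n <= t /\ indel_steps q n s u.

Definition detecting (C : seq nat -> Prop) (B : seq nat -> seq nat -> Prop) : Prop :=
  forall p, C p -> forall u, (C u /\ B p u) <-> u = p.

Definition del_detecting (t : nat) (C : seq nat -> Prop) := detecting C (B_del t).
Definition ins_detecting (q t : nat) (C : seq nat -> Prop) := detecting C (B_ins q t).
Definition indel_detecting (q t : nat) (C : seq nat -> Prop) := detecting C (B_indel q t).

(* Main.v *)
Require Import Defs.
From mathcomp Require Import all_boot.

Lemma code_size (q : nat) (C : seq nat -> Prop) s : is_code q C -> C s -> 0 < size s.
Proof. by move=> HC /HC /and4P[]. Qed.

Theorem mainTheorem1 :
  (forall (q t : nat) (C : seq nat -> Prop), 1 <= q -> is_code q C ->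
     (del_detecting t C <-> ins_detecting q t C)) /\
  (forall (q t : nat), 3 <= q -> 1 <= t ->
     exists C : seq nat -> Prop,
       is_code q C /\ del_detecting t C /\ ~ indel_detecting q 2 C).
Proof.
split.
  move=> q t C _ HC; split.
    move=> Hdel p Cp u; split.
      move=> [Cu [w [hw [eu pu]]]].
      suff : p = u by [].
      apply/(Hdel u Cu p); split => //.
      exists (size w); split => //.
      rewrite /tail_del eu size_cat.
      have hp := @code_size q C p HC Cp.
      have -> : minn (size w) (size w + size p).-1 = size w.
        by apply/minn_idPl; rewrite -subn1 -addnBA // leq_addr.
      by rewrite drop_size_cat.
    move=> ->; split => //; exists [::]; split => //; split => //.
    exact: HC.
  move=> Hins p Cp u; split.
    move=> [Cu [j [hj eu]]].
    suff : p = u by [].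
    apply/(Hins u Cu p); split => //.
    exists (take (minn j (size p).-1) p); split.
      by rewrite size_take_min; apply: leq_trans (geq_minl _ _) _; apply: leq_trans (geq_minl _ _) hj.
    split; last exact: HC.
    by rewrite eu /tail_del cat_take_drop.
  move=> ->; split => //; exists 0; split => //.
  by rewrite /tail_del min0n drop0.
move=> q t hq ht.
exists (fun s => s = [:: 1; 0] \/ s = [:: 2; 0]).
split.
  have h1 : 0 < q by apply: leq_trans hq.
  have h2 : 1 < q by apply: leq_trans hq.
  have h3 : 2 < q by [].
  by move=> s [->|->]; rewrite /is_pperm /= h1 h2 ?h3 ?(ltnW h3).
split.
  move=> p Cp u; split; last first.
    by move=> ->; split => //; exists 0; split => //; rewrite /tail_del min0n drop0.
  move=> [Cu [j [hj eu]]]; subst u.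
  case: Cp Cu => -> ; case: j hj => [|j] hj /=; rewrite /tail_del /= ?min0n ?drop0 //; by case.
move=> H.
have // : [:: 2; 0] = [:: 1; 0].
apply: (H [:: 1; 0] (or_introl erefl) [:: 2; 0]).1.
split; first by right.
exists 2; split => //.
exists [:: 0]; split; first by left.
exists [:: 2; 0]; split => //.
by right; exists 2.
Qed.
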